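(* Let $\mathcal{M}=\mathbb{R}^{d_{\mathbb E}}\times\mathbb{S}^{d_{\mathbb S}}\times\mathbb{H}^{d_{\mathbb H}}$ be a product space form with spherical curvature $C_{\mathbb S}>0$, hyperbolic curvature $C_{\mathbb H}<0$, and fixed positive weights $\alpha_{\mathbb E},\alpha_{\mathbb S},\alpha_{\mathbb H}$. Then the VC dimension of the class of linear classifiers on $\mathcal{M}$ (defined below) is at least $\dim(\mathcal{M})+1=d_{\mathbb E}+d_{\mathbb S}+d_{\mathbb H}+1$.
   Context: Space forms have dimension at least $2$. $\mathbb{S}^{d}=\{x\in\mathbb{R}^{d+1}:\langle x,x\rangle=C_{\mathbb S}^{-1}\}$ with $\langle\cdot,\cdot\rangle$ the dot product; $\mathbb{H}^{d}=\{x\in\mathbb{R}^{d+1}:[x,x]=C_{\mathbb H}^{-1},x_1>0\}$ with $[u,v]=u^\top Hv$, $H=\mathrm{diag}(-1,1,\dots,1)$. A point of $\mathcal{M}$ is written $x=(x_{\mathbb E},x_{\mathbb S},x_{\mathbb H})$. A linear classifier on $\mathcal{M}$ is a map $x\mapsto\mathrm{sgn}\big(\langle w_{\mathbb E},x_{\mathbb E}\rangle+\alpha_{\mathbb S}\,\mathrm{asin}(\langle w_{\mathbb S},x_{\mathbb S}\rangle)+\alpha_{\mathbb H}\,\mathrm{asinh}([w_{\mathbb H},x_{\mathbb H}])+b\big)$ with parameters $w_{\mathbb E}\in\mathbb{R}^{d_{\mathbb E}}$, $\|w_{\mathbb E}\|_2=\alpha_{\mathbb E}$, $w_{\mathbb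 S}\in\mathbb{R}^{d_{\mathbb S}+1}$, $\langle w_{\mathbb S},w_{\mathbb S}\rangle=C_{\mathbb S}$, $w_{\mathbb H}\in\mathbb{R}^{d_{\mathbb H}+1}$, $[w_{\mathbb H},w_{\mathbb H}]=-C_{\mathbb H}$, $b\in\mathbb{R}$. *)

(* Defs.v *)
From HB Require Import structures.
From mathcomp Require Import all_boot all_order all_algebra.
From mathcomp Require Import all_classical all_reals all_analysis.
Set Implicit Arguments. Unset Strict Implicit. Unset Printing Implicit Defensive.
Import Order.TTheory GRing.Theory Num.Theory.
Local Open Scope ring_scope.

Section ProductSpaceForms.
Variable R : realType.

Definition dotp (n : nat) (u v : 'rV[R]_n) : R := \sum_(i < n) u ord0 i * v ord0 i.

Definition minkp (n : nat) (u v : 'rV[R]_n.+1) : R :=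
  - (u ord0 ord0 * v ord0 ord0) + \sum_(i < n.+1 | i != ord0) u ord0 i * v ord0 i.

Definition asinh (x : R) : R := ln (x + Num.sqrt (x ^+ 2 + 1)).

Definition on_sphere (CS : R) (d : nat) (x : 'rV[R]_d.+1) : Prop :=
  dotp x x = CS^-1.

Definition on_hyperboloid (CH : R) (d : nat) (x : 'rV[R]_d.+1) : Prop :=
  minkp x x = CH^-1 /\ 0 < x ord0 ord0.

Definition Mpt (dE dS dH : nat) : Type :=
  ('rV[R]_dE * 'rV[R]_dS.+1 * 'rV[R]_dH.+1)%type.

Definition on_M (CS CH : R) (dE dS dH : nat) (x : Mpt dE dS dH) : Prop :=
  on_sphere CS x.1.2 /\ on_hyperboloid CH x.2.

Definition admissible_params (CS CH aE : R) (dE dS dH : nat)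
  (wE : 'rV[R]_dE) (wS : 'rV[R]_dS.+1) (wH : 'rV[R]_dH.+1) : Prop :=
  Num.sqrt (dotp wE wE) = aE /\ dotp wS wS = CS /\ minkp wH wH = - CH.

Definition lin_classifier (aS aH : R) (dE dS dH : nat)
  (wE : 'rV[R]_dE) (wS : 'rV[R]_dS.+1) (wH : 'rV[R]_dH.+1) (b : R)
  (x : Mpt dE dS dH) : R :=
  Num.sg (dotp wE x.1.1 + aS * asin (dotp wS x.1.2) + aH * asinh (minkp wH x.2) + b).

Definition lin_classifiers (CS CH aE aS aH : R) (dE dS dH : nat)
  : set (Mpt dE dS dH -> R) :=
  [set h | exists wE wS wH b,
     admissible_params CS CH aE wE wS wH /\ h = lin_classifier aS aH wE wS wH b].

End ProductSpaceForms.

Definition label (R : realType) (b : bool) : R := if b then 1 else -1.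

Definition shatters (R : realType) (X : Type) (C : set (X -> R)) (n : nat)
  (pts : 'I_n -> X) : Prop :=
  forall y : 'I_n -> bool, exists h, C h /\ forall i, h (pts i) = label R (y i).

Definition vc_dim_ge (R : realType) (X : Type) (D : set X) (C : set (X -> R))
  (n : nat) : Prop :=
  exists pts : 'I_n -> X, injective pts /\ (forall i, D (pts i)) /\ shatters C pts.

(* Main.v *)
Require Import Defs.
From HB Require Import structures.
From mathcomp Require Import all_boot all_order all_algebra.
From mathcomp Require Import all_classical all_reals all_analysis.
From mathcomp Require Import lra zify.
Import Order.TTheory GRing.Theory Num.Theory.
Local Open Scope ring_scope.

Section Aux.
Variable R : realType.

Lemma asin0' : asin (0:R) = 0.
Proof. by rewrite -{1}sin0 sinK // in_itv/= oppr_le0 divr_ge0 ?pi_ge0. Qed.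

Lemma asinN' (x : R) : -1 <= x <= 1 -> asin (- x) = - asin x.
Proof.
move=> hx; have [/andP[h1 h2] h3] := asin_def hx.
rewrite -{1}h3 -sinN sinK // in_itv/= lerN2 h2 /= -lerN2 opprK h1 //.
Qed.

Lemma asin_gt0' (x : R) : 0 < x <= 1 -> 0 < asin x.
Proof.
move=> /andP[x0 x1].
have hx : -1 <= x <= 1 by rewrite x1 andbT (le_trans _ (ltW x0)) // lerN10.
have [/andP[h1 h2] h3] := asin_def hx.
rewrite ltNge; apply/negP => hle.
have : 0 <= sin (- asin x).
  apply: sin_ge0_pi; rewrite oppr_ge0 hle /=.
  have hp : pi / 2 <= pi :> R by rewrite ler_pdivrMr // ler_peMr ?pi_ge0 ?ler1n.
  by apply: (le_trans _ hp); rewrite lerNl.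
by rewrite sinN h3 oppr_ge0 leNgt x0.
Qed.

Lemma asinhN (x : R) : asinh (- x) = - asinh x.
Proof.
rewrite /asinh sqrrN.
have s0 : `|x| < Num.sqrt (x ^+ 2 + 1).
  by rewrite -ltr_sqr ?sqr_sqrtr ?nnegrE ?normr_ge0 ?sqrtr_ge0 ?real_normK ?num_real ?ltrDl // addr_ge0 // sqr_ge0.
have p1 : 0 < x + Num.sqrt (x ^+ 2 + 1).
  by rewrite addrC -ltrBlDr sub0r (le_lt_trans _ s0) // -normrN ler_norm.
have -> : - x + Num.sqrt (x ^+ 2 + 1) = (x + Num.sqrt (x ^+ 2 + 1))^-1.
  apply: (@mulIf _ (x + Num.sqrt (x ^+ 2 + 1))); first by rewrite gt_eqF.
  rewrite mulVf ?gt_eqF // addrC [x + _]addrC -subr_sqr sqr_sqrtr; first by rewrite addrAC subrr add0r.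
  by rewrite addr_ge0 // sqr_ge0.
have hp : x + Num.sqrt (x ^+ 2 + 1) \is Num.pos by rewrite posrE.
exact: (lnV hp).
Qed.

Lemma asinh0 : asinh (0:R) = 0.
Proof. by rewrite /asinh expr0n /= add0r add0r sqrtr1 ln1. Qed.

Lemma asinh_gt0 (x : R) : 0 < x -> 0 < asinh x.
Proof.
move=> x0; rewrite /asinh; apply: ln_gt0.
rewrite -ltrBlDl; apply: (le_lt_trans (y := 1)); first by rewrite lerBlDr lerDl ltW.
rewrite -{1}(sqrtr1 R) ltr_sqrt ?ltrDr ?exprn_gt0 //.
by rewrite addr_gt0 // exprn_gt0.
Qed.

End Aux.

Section T.
Variable R : realType.
Lemma sum_delta n (F : nat -> R) j c : (j < n)%N ->
  \sum_(i<n) F i * (if (i:nat) == j then c else 0) = F j * c.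
Proof.
move=> hj; rewrite (bigD1 (Ordinal hj)) //= eqxx big1 ?addr0 // => i hi.
by rewrite ifF ?mulr0 //; apply/negbTE; move: hi; apply: contra => /eqP h; apply/eqP/val_inj.
Qed.
Lemma sum_delta0 n (F : nat -> R) j c : (n <= j)%N ->
  \sum_(i<n) F i * (if (i:nat) == j then c else 0) = 0.
Proof.
move=> hj; rewrite big1 // => i _; rewrite ifF ?mulr0 //.
by apply/negbTE; rewrite neq_ltn (leq_trans (ltn_ord i) hj).
Qed.
Lemma dotpS n (u v : 'rV[R]_n.+1) : dotp u v =
  u ord0 ord0 * v ord0 ord0 + \sum_(i<n) u ord0 (lift ord0 i) * v ord0 (lift ord0 i).
Proof. by rewrite /dotp big_ord_recl. Qed.
Lemma minkpS n (u v : 'rV[R]_n.+1) : minkp u v =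
  - (u ord0 ord0 * v ord0 ord0) + \sum_(i<n) u ord0 (lift ord0 i) * v ord0 (lift ord0 i).
Proof.
by rewrite /minkp big_mkcond big_ord_recl /= add0r.
Qed.
End T.

Section Main.
Variable R : realType.
Variables (dE dS dH : nat) (CS CH aE aS aH : R).
Hypotheses (hdE : (2 <= dE)%N) (hdS : (2 <= dS)%N) (hdH : (2 <= dH)%N)
  (hCS : 0 < CS) (hCH : CH < 0) (haE : 0 < aE) (haS : 0 < aS) (haH : 0 < aH).

Definition eE (k : nat) : 'rV[R]_dE := \row_(i < dE) (if (i:nat) == k then 1 else 0).
Definition sS (j : nat) : 'rV[R]_dS.+1 :=
  \row_(i < dS.+1) (if (i:nat) == j then (Num.sqrt CS)^-1 else 0).
Definition h0 : 'rV[R]_dH.+1 :=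
  \row_(i < dH.+1) (if (i:nat) == 0%N then (Num.sqrt (- CH))^-1 else 0).
Definition hj (j : nat) : 'rV[R]_dH.+1 :=
  \row_(i < dH.+1) (if (i:nat) == 0%N then Num.sqrt (1 - CH^-1)
                    else if (i:nat) == j then 1 else 0).
Definition inS k := (dE <= k)%N && (k < dE + dS)%N.
Definition inH k := (dE + dS <= k)%N && (k < dE + dS + dH)%N.
Definition pt (k : nat) : Mpt R dE dS dH :=
  (eE k, if inS k then sS (k - dE).+1 else sS 0,
   if inH k then hj (k - dE - dS).+1 else h0).

Lemma on_sS j : (j <= dS)%N -> on_sphere CS (sS j).
Proof.
move=> hj; rewrite /on_sphere /dotp.
under eq_bigr do rewrite mxE.
rewrite (@sum_delta R _ (fun i : nat => if i == j then (Num.sqrt CS)^-1 else 0)) ?ltnS //.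
by rewrite eqxx -invfM -expr2 sqr_sqrtr // ltW.
Qed.

Lemma on_h0 : on_hyperboloid CH h0.
Proof.
split; last by rewrite mxE /= invr_gt0 sqrtr_gt0 oppr_gt0.
rewrite minkpS big1 => [|i _]; last by rewrite !mxE lift0 /= mulr0.
by rewrite !mxE /= addr0 -invfM -expr2 sqr_sqrtr ?invrN ?opprK // oppr_ge0 ltW.
Qed.

Lemma on_hj j : (j < dH)%N -> on_hyperboloid CH (hj j.+1).
Proof.
move=> hj; split; last first.
  by rewrite mxE /= sqrtr_gt0 subr_gt0 (lt_trans (y := 0)) // invr_lt0.
rewrite minkpS.
under eq_bigr do rewrite !mxE lift0 /=.
rewrite (@sum_delta R _ (fun i : nat => if i == j then 1 else 0)) // eqxx mulr1 !mxE /=.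
rewrite -expr2 sqr_sqrtr; first by rewrite opprB subrK.
by rewrite subr_ge0 (le_trans (y := 0)) // ?ler01 // invr_le0 ltW.
Qed.

Lemma on_pt k : on_M CS CH (pt k).
Proof.
split; rewrite /pt /=.
  case: ifP => [/andP[h1 h2]|_]; apply: on_sS => //.
  lia.
case: ifP => [/andP[h1 h2]|_]; last exact: on_h0.
apply: on_hj; lia.
Qed.


Definition rE := aE / Num.sqrt dE%:R.
Definition rS := Num.sqrt (CS / dS%:R).
Definition rH := Num.sqrt (- CH / dH%:R).
Definition uS := rS / Num.sqrt CS.
Definition AS := aS * asin uS.
Definition AH := aH * asinh rH.
Definition mm := Num.min rE (Num.min AS AH) / 2.

Definition FS (yn : nat -> bool) (i : nat) : R :=
  if i == 0%N then 0 else label R (yn (dE + i.-1)%N) * rS.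
Definition FH (yn : nat -> bool) (i : nat) : R :=
  if i == 0%N then 0 else label R (yn (dE + dS + i.-1)%N) * rH.
Definition wE (yn : nat -> bool) : 'rV[R]_dE := \row_(i < dE) (label R (yn i) * rE).
Definition wS (yn : nat -> bool) : 'rV[R]_dS.+1 := \row_(i < dS.+1) FS yn i.
Definition wH (yn : nat -> bool) : 'rV[R]_dH.+1 := \row_(i < dH.+1) FH yn i.
Definition bb (yn : nat -> bool) : R := label R (yn (dE + dS + dH)%N) * mm.

Lemma divn_mulrn (x : R) n : (0 < n)%N -> x / n%:R *+ n = x.
Proof. by move=> h; rewrite -[X in X = _]mulr_natr divfK // pnatr_eq0 -lt0n. Qed.

Lemma label_sqr b : label R b ^+ 2 = 1.
Proof. by case: b; rewrite /label ?expr1n ?sqrrN ?expr1n. Qed.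

Lemma dE_gt0 : 0 < dE%:R :> R.
Proof. by rewrite ltr0n (leq_trans _ hdE). Qed.
Lemma dS_gt0 : 0 < dS%:R :> R.
Proof. by rewrite ltr0n (leq_trans _ hdS). Qed.
Lemma dH_gt0 : 0 < dH%:R :> R.
Proof. by rewrite ltr0n (leq_trans _ hdH). Qed.

Lemma rE_gt0 : 0 < rE.
Proof. by rewrite /rE divr_gt0 // sqrtr_gt0 dE_gt0. Qed.
Lemma rS_gt0 : 0 < rS.
Proof. by rewrite /rS sqrtr_gt0 divr_gt0 // dS_gt0. Qed.
Lemma rH_gt0 : 0 < rH.
Proof. by rewrite /rH sqrtr_gt0 divr_gt0 ?dH_gt0 // oppr_gt0. Qed.
Lemma uS_gt0 : 0 < uS.
Proof. by rewrite /uS divr_gt0 ?rS_gt0 // sqrtr_gt0. Qed.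
Lemma uS_le1 : uS <= 1.
Proof.
rewrite /uS ler_pdivrMr ?sqrtr_gt0 // mul1r /rS ler_sqrt; last exact: ltW.
  by rewrite ler_pdivrMr ?dS_gt0 // ler_peMr ?(ltW hCS) // ler1n (leq_trans _ hdS).
Qed.
Lemma AS_gt0 : 0 < AS.
Proof. by rewrite /AS mulr_gt0 // asin_gt0' // uS_gt0 uS_le1. Qed.
Lemma AH_gt0 : 0 < AH.
Proof. by rewrite /AH mulr_gt0 // asinh_gt0 // rH_gt0. Qed.
Lemma mm_gt0 : 0 < mm.
Proof.
by rewrite /mm divr_gt0 // !lt_min rE_gt0 AS_gt0 AH_gt0.
Qed.
Lemma mm_lt (A : R) : Num.min rE (Num.min AS AH) <= A -> mm < A.
Proof.
move=> h; apply: lt_le_trans h; rewrite /mm.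
have := mm_gt0; rewrite /mm => h0'.
lra.
Qed.

Lemma adm yn : admissible_params CS CH aE (wE yn) (wS yn) (wH yn).
Proof.
split; [|split].
- rewrite /dotp; under eq_bigr do rewrite !mxE -expr2 exprMn label_sqr mul1r.
  rewrite sumr_const card_ord /rE exprMn exprVn sqr_sqrtr ?ler0n //.
  rewrite ?mul1r divn_mulrn ?(leq_trans _ hdE) // sqrtr_sqr gtr0_norm //.
- rewrite dotpS !mxE /FS eqxx mul0r add0r.
  under eq_bigr do rewrite !mxE lift0 /= -expr2 exprMn label_sqr mul1r.
  rewrite sumr_const card_ord /rS sqr_sqrtr ?divr_ge0 ?ler0n ?ltW //.
  by rewrite divn_mulrn ?(leq_trans _ hdS).
- rewrite minkpS !mxE /FH eqxx mul0r oppr0 add0r.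
  under eq_bigr do rewrite !mxE lift0 /= -expr2 exprMn label_sqr mul1r.
  rewrite sumr_const card_ord /rH sqr_sqrtr ?divr_ge0 ?ler0n ?oppr_ge0 ?ltW //.
  by rewrite divn_mulrn ?(leq_trans _ hdH).
Qed.

Lemma dotE yn k : dotp (wE yn) (eE k) = if (k < dE)%N then label R (yn k) * rE else 0.
Proof.
rewrite /dotp; under eq_bigr do rewrite !mxE.
case: ltnP => h.
  by rewrite (@sum_delta R _ (fun i => label R (yn i) * rE)) // mulr1.
by rewrite (@sum_delta0 R _ (fun i => label R (yn i) * rE)).
Qed.

Lemma dotS yn j : (j <= dS)%N -> dotp (wS yn) (sS j) = FS yn j * (Num.sqrt CS)^-1.
Proof.
move=> h; rewrite /dotp; under eq_bigr do rewrite !mxE.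
by rewrite (@sum_delta R _ (FS yn)).
Qed.

Lemma minkH0 yn : minkp (wH yn) h0 = 0.
Proof.
rewrite minkpS !mxE /FH eqxx mul0r oppr0 add0r big1 // => i _.
by rewrite !mxE lift0 /= mulr0.
Qed.

Lemma minkHj yn j : (j < dH)%N -> minkp (wH yn) (hj j.+1) = FH yn j.+1.
Proof.
move=> h; rewrite minkpS !mxE {1}/FH eqxx mul0r oppr0 add0r.
under eq_bigr do rewrite !mxE lift0 /=.
by rewrite (@sum_delta R _ (fun i => FH yn i.+1)) // mulr1.
Qed.

Lemma asin_lab b (u : R) : 0 <= u <= 1 -> asin (label R b * u) = label R b * asin u.
Proof.
move=> /andP[h1 h2]; case: b; rewrite /label ?mul1r // !mulN1r asinN' //.
by rewrite h2 andbT (le_trans _ h1) // lerN10.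
Qed.

Lemma asinh_lab b (u : R) : asinh (label R b * u) = label R b * asinh u.
Proof. by case: b; rewrite /label ?mul1r // !mulN1r asinhN. Qed.

Lemma sg_lab b (A c : R) : 0 < A -> `|c| < A -> Num.sg (label R b * A + c) = label R b.
Proof.
move=> hA; rewrite ltr_norml => /andP[h1 h2]; case: b; rewrite /label.
  by rewrite gtr0_sg //; lra.
by rewrite ltr0_sg //; lra.
Qed.

Lemma norm_bb yn : `|bb yn| = mm.
Proof.
by rewrite /bb normrM; case: (yn _); rewrite /label ?normrN normr1 mul1r gtr0_norm // mm_gt0.
Qed.

Definition V yn k := dotp (wE yn) (pt k).1.1 + aS * asin (dotp (wS yn) (pt k).1.2)
  + aH * asinh (minkp (wH yn) (pt k).2) + bb yn.

Lemma sgV yn k : (k < dE + dS + dH + 1)%N -> Num.sg (V yn k) = label R (yn k).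
Proof.
move=> hk; rewrite /V /pt /= dotE.
have hb := norm_bb yn.
have hmin : Num.min rE (Num.min AS AH) <= rE /\ Num.min rE (Num.min AS AH) <= AS /\
   Num.min rE (Num.min AS AH) <= AH.
  by rewrite !ge_min !lexx !orbT.
case: hmin => m1 [m2 m3].
case: (ltnP k dE) => h1.
  rewrite /inS /inH ifF; last by apply/negbTE; rewrite negb_and -ltnNge h1.
  rewrite ifF; last by apply/negbTE; rewrite negb_and -ltnNge (leq_trans h1) // leq_addr.
  rewrite dotS // /FS eqxx mul0r asin0' minkH0 asinh0 !mulr0 !addr0.
  by apply: sg_lab; rewrite ?rE_gt0 // hb mm_lt.
case: ifP => hS.
  move: hS; rewrite /inS h1 /= => hS.
  rewrite /inH ifF; last by apply/negbTE; rewrite negb_and -ltnNge hS.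
  rewrite dotS; last by lia.
  rewrite /FS /= subnKC // minkH0 asinh0 mulr0 addr0 add0r -mulrA -/uS.
  rewrite asin_lab; last by rewrite (ltW uS_gt0) uS_le1.
  rewrite mulrCA -/AS.
  by apply: sg_lab; rewrite ?AS_gt0 // hb mm_lt.
case: ifP => hH.
  move: hH; rewrite /inH => /andP[hH1 hH2].
  rewrite dotS // /FS eqxx mul0r asin0' mulr0 addr0 add0r minkHj; last by lia.
  rewrite /FH /=.
  have -> : (dE + dS + (k - dE - dS) = k)%N by lia.
  rewrite asinh_lab mulrCA -/AH.
  by apply: sg_lab; rewrite ?AH_gt0 // hb mm_lt.
rewrite dotS // /FS eqxx mul0r asin0' mulr0 minkH0 asinh0 mulr0 !add0r.
have -> : k = (dE + dS + dH)%N.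
  move: hS hH; rewrite /inS /inH h1 /=; lia.
rewrite /bb; case: (yn _); rewrite /label ?mul1r ?mulN1r.
  by rewrite gtr0_sg // mm_gt0.
by rewrite ltr0_sg // oppr_lt0 mm_gt0.
Qed.

Lemma injE k k' : (k < dE)%N -> pt k = pt k' -> k = k'.
Proof.
move=> h E; have := congr1 (fun x : Mpt R dE dS dH => x.1.1 ord0 (Ordinal h)) E.
rewrite /= !mxE /= eqxx; case: eqP => // _ /eqP; by rewrite oner_eq0.
Qed.

Lemma injS k k' : inS k -> pt k = pt k' -> k = k'.
Proof.
move=> hS E; have hi : ((k - dE).+1 < dS.+1)%N by move: hS; rewrite /inS; lia.
have := congr1 (fun x : Mpt R dE dS dH => x.1.2 ord0 (Ordinal hi)) E.
rewrite /pt /= hS.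
have c0 : (Num.sqrt CS)^-1 != 0 by rewrite invr_eq0 gt_eqF // sqrtr_gt0.
case: ifP => hS'; rewrite !mxE /= eqxx; last by move=> /eqP; rewrite (negbTE c0).
case: eqP => [e|_]; last by move=> /eqP; rewrite (negbTE c0).
move: hS hS' e; rewrite /inS; lia.
Qed.

Lemma injH k k' : inH k -> pt k = pt k' -> k = k'.
Proof.
move=> hH E; have hi : ((k - dE - dS).+1 < dH.+1)%N by move: hH; rewrite /inH; lia.
have := congr1 (fun x : Mpt R dE dS dH => x.2 ord0 (Ordinal hi)) E.
rewrite /pt /= hH.
case: ifP => hH'; rewrite !mxE /= eqxx; last by move=> /eqP; rewrite oner_eq0.
case: eqP => [e|_]; last by move=> /eqP; rewrite oner_eq0.
move: hH hH' e; rewrite /inH; lia.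
Qed.

Lemma pt_inj k k' : (k < dE + dS + dH + 1)%N -> (k' < dE + dS + dH + 1)%N ->
  pt k = pt k' -> k = k'.
Proof.
have key : forall a b, pt a = pt b -> (a < dE)%N || inS a || inH a -> a = b.
  move=> a b E /orP[/orP[h|h]|h]; [exact: injE h E|exact: injS h E|exact: injH h E].
move=> hk hk' E.
case: (boolP ((k < dE)%N || inS k || inH k)) => [h|h]; first exact: key.
case: (boolP ((k' < dE)%N || inS k' || inH k')) => [h'|h'].
  by symmetry; apply: key.
move: h h'; rewrite /inS /inH; lia.
Qed.

End Main.

Theorem theorem2 (R : realType) (dE dS dH : nat)
  (hdE : (2 <= dE)%N) (hdS : (2 <= dS)%N) (hdH : (2 <= dH)%N)
  (CS CH aE aS aH : R)
  (hCS : 0 < CS) (hCH : CH < 0) (haE : 0 < aE) (haS : 0 < aS) (haH : 0 < aH) :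
  vc_dim_ge (@on_M R CS CH dE dS dH)
            (@lin_classifiers R CS CH aE aS aH dE dS dH)
            (dE + dS + dH + 1).
Proof.
exists (fun i : 'I_(dE + dS + dH + 1) => pt R dE dS dH CS CH (val i)).
split.
  move=> i j E; apply: val_inj.
  exact: (@pt_inj R dE dS dH CS CH aE aS aH hdE hdS hdH hCS hCH haE haS haH _ _ (ltn_ord i) (ltn_ord j) E).
split.
  by move=> i; apply: (@on_pt R dE dS dH CS CH aE aS aH hdE hdS hdH hCS hCH haE haS haH).
move=> y.
pose yn := fun k : nat => if @insub _ _ 'I_(dE + dS + dH + 1) k is Some i then y i else true.
exists (lin_classifier aS aH (wE R dE aE yn) (wS R dE dS CS yn) (wH R dE dS dH CH yn)
  (bb R dE dS dH CS CH aE aS aH yn)).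
split.
  exists (wE R dE aE yn), (wS R dE dS CS yn), (wH R dE dS dH CH yn),
    (bb R dE dS dH CS CH aE aS aH yn); split => //.
  exact: (@adm R dE dS dH CS CH aE hdE hdS hdH hCS hCH haE).
move=> i.
have -> : y i = yn (val i) by rewrite /yn valK.
exact: (@sgV R dE dS dH CS CH aE aS aH hdE hdS hdH hCS hCH haE haS haH yn _ (ltn_ord i)).
Qed.
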